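(* Let $m \geq 2$ be an integer, let $1 \leq p \leq q < \infty$, and let $1 \leq p_i \leq q_i < \infty$ for $i = 1, 2, \dots, m$. Define $p^*$ by $\frac{1}{p^*} = \sum_{i=1}^{m} \frac{1}{p_i}$, and assume $\frac{1}{p^*} \leq \frac{1}{p}$ and $\sum_{i=1}^{m} \frac{1}{q_i} = \frac{1}{q}$. Then for all functions $f_i \in w\mathcal{M}^{p_i}_{q_i}(\mathbb{R}^n)$, $i=1,\dots,m$, we have $$ \Bigl\| \prod_{i=1}^{m} f_i \Bigr\|_{w\mathcal{M}^{p}_{q}} \leq \prod_{i=1}^{m} \left( \frac{p_i}{p^*} \right)^{\frac{1}{p_i}} \| f_i \|_{w\mathcal{M}^{p_i}_{q_i}}. $$
   Context: For $1 \leq p \leq q < \infty$, the weak Morrey space $w\mathcal{M}^p_q(\mathbb{R}^n)$ is the set of all measurable functions $f:\mathbb{R}^n \to \mathbb{R}$ such that $$\|f\|_{w\mathcal{M}^p_q} = \sup_{B = B(a,r),\ \gamma>0} |B|^{\frac{1}{q} - \frac{1}{p}}\, \gamma\, \bigl| \{x \in B: |f(x)| > \gamma \} \bigr|^{\frac{1}{p}} < \infty,$$ where the supremum is over all open balls $B=B(a,r)\subseteq\mathbb{R}^n$ (center $a$, radius $r>0$) and all $\gamma>0$, and $|\cdot|$ denotes Lebesgue measure. Equivalently, $\|f\|_{w\mathcal{M}^p_q} = \sup_{B} |B|^{\frac1q-\frac1p}\|f\|_{L^{p,\infty}(B)}$ with $\|f\|_{L^{p,\infty}(B)} = \sup_{\gamma>0}\gamma\,|\{x\in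 B:|f(x)|>\gamma\}|^{1/p}$. The product $\prod_{i=1}^m f_i$ is the pointwise product. *)

(* Defs.v *)
From HB Require Import structures.
From mathcomp Require Import all_boot all_order all_algebra.
From mathcomp Require Import all_classical all_reals all_analysis.
Set Implicit Arguments. Unset Strict Implicit. Unset Printing Implicit Defensive.
Import Order.TTheory GRing.Theory Num.Theory.
Local Open Scope classical_set_scope.
Local Open Scope ring_scope.

Definition box (R : realType) (n : nat) (a b : 'rV[R]_n) : set 'rV[R]_n :=
  [set x | forall i : 'I_n, a ord0 i <= x ord0 i /\ x ord0 i < b ord0 i].

Definition box_vol (R : realType) (n : nat) (a b : 'rV[R]_n) : R :=
  \prod_(i < n) Num.max 0 (b ord0 i - a ord0 i).

(* Lebesgue (outer) measure on R^n: infimum of total volumes of countable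
   covers by boxes. On Lebesgue measurable sets it is Lebesgue measure. *)
Definition leb (R : realType) (n : nat) (A : set 'rV[R]_n) : \bar R :=
  ereal_inf [set s : \bar R | exists a b : nat -> 'rV[R]_n,
     A `<=` \bigcup_k box (a k) (b k) /\
     s = (\sum_(0 <= k <oo) (box_vol (a k) (b k))%:E)%E].

Definition leb_measurable (R : realType) (n : nat) (A : set 'rV[R]_n) : Prop :=
  forall X : set 'rV[R]_n, leb X = (leb (X `&` A) + leb (X `&` ~` A))%E.

Definition leb_measurable_fun (R : realType) (n : nat) (f : 'rV[R]_n -> R)
  : Prop := forall c : R, leb_measurable [set x | c < f x].

Definition eball (R : realType) (n : nat) (a : 'rV[R]_n) (r : R)
  : set 'rV[R]_n :=
  [set x | Num.sqrt (\sum_(i < n) (x ord0 i - a ord0 i) ^+ 2) < r].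

Definition wMorrey_norm (R : realType) (n : nat) (p q : R)
  (f : 'rV[R]_n -> R) : \bar R :=
  ereal_sup [set y : \bar R | exists (a : 'rV[R]_n) (r g : R),
     0 < r /\ 0 < g /\
     y = (poweR (leb (eball a r)) (q^-1 - p^-1) * g%:E *
          poweR (leb (eball a r `&` [set x | (g < `|f x|)%R])) p^-1)%E].

Definition in_wMorrey (R : realType) (n : nat) (p q : R)
  (f : 'rV[R]_n -> R) : Prop :=
  leb_measurable_fun f /\ (wMorrey_norm p q f < +oo)%E.

(* Main.v *)
Require Import Defs.
From HB Require Import structures.
From mathcomp Require Import all_boot all_order all_algebra.
From mathcomp Require Import all_classical all_reals all_analysis.
From mathcomp Require Import ring lra.
Import Order.TTheory GRing.Theory Num.Theory.
Local Open Scope ring_scope.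

Set Implicit Arguments. Unset Strict Implicit.

Local Open Scope classical_set_scope.
Local Open Scope ereal_scope.

Lemma leb_ge0 (R : realType) (n : nat) (A : set 'rV[R]_n) : 0 <= leb A.
Proof.
apply/ereal_infP => y [a [b [_ ->]]]; apply: nneseries_ge0 => k _ _.
rewrite lee_fin; apply: prodr_ge0 => i _; by rewrite le_max lexx.
Qed.

Lemma leb_le (R : realType) (n : nat) (A B : set 'rV[R]_n) :
  A `<=` B -> leb A <= leb B.
Proof.
move=> AB; apply: le_ereal_inf => s [a [b [cov ->]]]; exists a, b; split => //.
exact: subset_trans cov.
Qed.

Lemma leb0 (R : realType) (n : nat) : (0 < n)%N -> leb (@set0 'rV[R]_n) = 0.
Proof.
case: n => // n _; apply/le_anti; rewrite leb_ge0 andbT.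
apply: ereal_inf_lbound; exists (fun=> 0%R), (fun=> 0%R); split => //.
rewrite eseries0 // => k _ _.
by rewrite /box_vol big_ord_recl subrr maxxx mul0r.
Qed.

Lemma leb_dim0 (R : realType) (A : set 'rV[R]_0) : leb A = +oo.
Proof.
apply/eqP; rewrite eq_le leey /=; apply/ereal_infP => s [a [b [_ ->]]].
have H : forall k, (k%:R)%:E <= \sum_(0 <= i <oo) (box_vol (a i) (b i))%:E.
  move=> k; apply: le_trans (nneseries_lim_ge k _).
    rewrite (eq_bigr (fun=> 1%:E)); last by move=> i _; rewrite /box_vol big_ord0.
    by rewrite sumEFin sumr_const_nat subn0.
  by move=> i _ _; rewrite /box_vol big_ord0; exact: lee01.
move: H; move: (\sum_(0 <= i <oo) _) => x H.
have x0 : 0 <= x by apply: le_trans (H 0%N); rewrite lee_fin.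
case: x H x0 => [r| |] H x0 //.
have := H (Num.Def.trunc r).+1; rewrite lee_fin => /(lt_le_trans (truncnS_gt r)).
by rewrite ltxx.
Qed.

Lemma leb_ball_fin (R : realType) (n : nat) (a : 'rV[R]_n) (r : R) :
  (0 < n)%N -> leb (eball a r) < +oo.
Proof.
case: n a => // n a _.
pose c : 'rV[R]_n.+1 := const_mx r.
pose A := fun k : nat => (a - c)%R.
pose B := fun k : nat => if k == 0%N then (a + c)%R else (a - c)%R.
apply: (le_lt_trans (y := \sum_(0 <= k <oo) (box_vol (A k) (B k))%:E)).
  apply: ereal_inf_lbound; exists A, B; split => //.
  move=> x xb; exists 0%N => // i; rewrite /A /B /= /c !mxE.
  move: xb; rewrite /eball /= => xb.
  have : (`|x ord0 i - a ord0 i| < r)%R.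
    apply: le_lt_trans xb; rewrite -sqrtr_sqr ler_sqrt; last first.
      by apply: sumr_ge0 => j _; apply: sqr_ge0.
    rewrite (bigD1 i) //= lerDl; by apply: sumr_ge0 => j _; apply: sqr_ge0.
  rewrite ltr_norml => /andP[h1 h2]; split; [apply: ltW|]; lra.
rewrite (nneseries_split_cond 0 1); last first.
  by move=> k _; rewrite lee_fin; apply: prodr_ge0 => i _; rewrite le_max lexx.
rewrite eseries0; last first.
  move=> k; rewrite add0n => k1 _; rewrite /A /B.
  have -> : (k == 0%N) = false by case: k k1.
  by rewrite /box_vol big_ord_recl subrr maxxx mul0r.
by rewrite adde0 big_nat1 ltry.
Qed.

Local Close Scope ereal_scope.
Local Close Scope classical_set_scope.

Local Open Scope classical_set_scope.
Local Open Scope ereal_scope.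

Lemma lebmC (R : realType) (n : nat) (A : set 'rV[R]_n) :
  leb_measurable A -> leb_measurable (~` A).
Proof. by move=> hA X; rewrite setCK addeC. Qed.

Lemma lebmI (R : realType) (n : nat) (A B : set 'rV[R]_n) :
  leb_measurable A -> leb_measurable B -> leb_measurable (A `&` B).
Proof.
move=> hA hB X; rewrite (hA X) (hB (X `&` A)).
rewrite (hA (X `&` ~` (A `&` B))).
have -> : X `&` ~` (A `&` B) `&` A = X `&` A `&` ~` B.
  by apply/seteqP; split => x /=; tauto.
have -> : X `&` ~` (A `&` B) `&` ~` A = X `&` ~` A.
  by apply/seteqP; split => x /=; tauto.
by rewrite setIA addeA.
Qed.

Lemma leb_split (R : realType) (n : nat) (I : eqType) (s : seq I)
  (G : I -> set 'rV[R]_n) (X : set 'rV[R]_n) :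
  (forall i, leb_measurable (G i)) ->
  leb X <= (\sum_(i <- s) leb (X `&` ~` G i))%R +
           leb (X `&` [set x | forall i, i \in s -> G i x]).
Proof.
move=> HG; elim: s X => [|j s IH] X.
  rewrite big_nil add0e; apply: leb_le => x Xx; split => //.
rewrite (HG j X) big_cons addeC -addeA; apply: leeD; first exact: lexx.
apply: le_trans (IH (X `&` G j)) _; apply: leeD.
  apply: lee_sum => i _; apply: leb_le => x [[Xx _] Gx]; by split.
apply: leb_le => x [[Xx Gx] Hs]; split => // i.
by rewrite in_cons => /orP[/eqP ->|]; [| exact: (Hs i)].
Qed.

Local Close Scope ereal_scope.
Local Close Scope classical_set_scope.


Lemma powRV (R : realType) (x a : R) : 0 <= x -> (x^-1) `^ a = (x `^ a)^-1.
Proof. by move=> x0; rewrite -powR_inv1 // -powRrM mulN1r powRN. Qed.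

Lemma powR_sum (R : realType) (I : Type) (r : seq I) (a : I -> R) (v : R) :
  0 < v -> v `^ (\sum_(i <- r) a i) = \prod_(i <- r) v `^ a i.
Proof.
move=> v0; apply: (big_morph (fun x => v `^ x)); last by rewrite powRr0.
by move=> x y /=; rewrite powRD // (gt_eqF v0) implybT.
Qed.

Lemma powRK (R : realType) (a p : R) : 0 <= a -> 0 < p -> (a `^ p^-1) `^ p = a.
Proof. by move=> a0 p0; rewrite -powRrM mulVf ?gt_eqF // powRr1. Qed.

Lemma core (R : realType) (m : nat) (p : R) (p_ q_ K : 'I_m -> R) (v l g : R) :
  (0 < m)%N -> 0 < v -> 0 <= l -> l <= v -> 0 < g -> 1 <= p ->
  (forall i, 0 < p_ i) -> (forall i, 0 < K i) ->
  let ps := (\sum_(i < m) (p_ i)^-1)^-1 in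
  ps^-1 <= p^-1 ->
  (forall s : 'I_m -> R, (forall i, 0 < s i) -> \prod_(i < m) s i = g ->
      l <= \sum_(i < m) v * (K i * v `^ (- (q_ i)^-1) / s i) `^ p_ i) ->
  v `^ ((\sum_(i < m) (q_ i)^-1) - p^-1) * g * l `^ p^-1
    <= \prod_(i < m) ((p_ i / ps) `^ (p_ i)^-1 * K i).
Proof.
move=> m0 v0 l0 lv g0 p1 pi0 K0 ps psp H.
set S := \sum_(i < m) (p_ i)^-1.
have S0 : 0 < S.
  rewrite /S (bigD1 (Ordinal m0)) //=.
  have h1 : 0 < (p_ (Ordinal m0))^-1 by rewrite invr_gt0.
  have h2 : 0 <= \sum_(i < m | i != Ordinal m0) (p_ i)^-1.
    by apply: sumr_ge0 => i _; rewrite invr_ge0 ltW.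
  lra.
have ps0 : 0 < ps by rewrite /ps invr_gt0.
have psS : ps * S = 1 by rewrite /ps mulVf ?gt_eqF.
pose c i := (p_ i / ps) `^ (p_ i)^-1.
have c0 i : 0 < c i by apply: powR_gt0; rewrite divr_gt0.
pose M i := K i * v `^ (- (q_ i)^-1).
have M0 i : 0 < M i by rewrite mulr_gt0 ?powR_gt0.
pose k := g / \prod_(i < m) (c i * M i).
have P0 : 0 < \prod_(i < m) (c i * M i) by apply: prodr_gt0 => i _; rewrite mulr_gt0.
have k0 : 0 < k by rewrite divr_gt0.
pose s i := c i * M i * k `^ (ps / p_ i).
have s0 i : 0 < s i.
  by apply: mulr_gt0; [apply: mulr_gt0|apply: powR_gt0].
have sg : \prod_(i < m) s i = g.
  rewrite /s big_split /= -powR_sum //.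
  rewrite -mulr_sumr -/S psS powRr1 ?ltW //.
  by rewrite /k mulrC divfK ?gt_eqF.
have := H s s0 sg.
have hterm i : v * (K i * v `^ (- (q_ i)^-1) / s i) `^ p_ i
              = v * (k `^ ps)^-1 * (ps * (p_ i)^-1).
  have hpi := pi0 i.
  have -> : K i * v `^ (- (q_ i)^-1) / s i = (c i * k `^ (ps / p_ i))^-1.
    rewrite /s -/(M i); have := c0 i; have := M0 i.
    have : 0 < k `^ (ps / p_ i) by apply: powR_gt0.
    move: (c i) (M i) (k `^ (ps / p_ i)) => a b d d0 b0 a0.
    by field; rewrite !gt_eqF.
  rewrite powRV; last by apply/ltW/mulr_gt0; [|apply: powR_gt0].
  rewrite powRM ?powR_ge0 //.
  rewrite /c powRK; [|by apply/ltW/divr_gt0|by []].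
  rewrite -powRrM divfK ?gt_eqF //.
  have := pi0 i; have : 0 < k `^ ps by apply: powR_gt0.
  move: (k `^ ps) (p_ i) => a b a0 b0.
  by field; rewrite !gt_eqF.
rewrite (eq_bigr _ (fun i _ => hterm i)) -mulr_sumr -mulr_sumr -/S psS mulr1 => lle.
set Q := \sum_(i < m) (q_ i)^-1.
have RHS : \prod_(i < m) ((p_ i / ps) `^ (p_ i)^-1 * K i)
           = \prod_(i < m) (c i * M i) * v `^ Q.
  rewrite powR_sum // -big_split; apply: eq_bigr => i _; rewrite /c /M powRN.
  have : 0 < v `^ (q_ i)^-1 by apply: powR_gt0.
  move: (v `^ (q_ i)^-1) => a a0 /=.
  by rewrite -mulrA divfK // gt_eqF.
have Pk : \prod_(i < m) (c i * M i) = g / k.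
  by rewrite /k invf_div mulrC divfK ?gt_eqF.
rewrite RHS Pk powRB; last by rewrite (gt_eqF v0) implybT.
have key : l `^ p^-1 <= v `^ p^-1 / k.
  have Sp : S <= p^-1 by rewrite -[S]invrK.
  have p0 : 0 < p by apply: lt_le_trans p1.
  have -> : l = (l / v) * v by rewrite divfK ?gt_eqF.
  rewrite powRM; [|by rewrite divr_ge0 // ltW|exact: ltW].
  rewrite (mulrC (v `^ p^-1)); apply: ler_wpM2r; first exact: powR_ge0.
  have [->|lpos] := eqVneq l 0.
    by rewrite mul0r powR0 ?invr_neq0 ?gt_eqF // invr_ge0 ltW.
  have l0' : 0 < l by rewrite lt_neqAle eq_sym lpos.
  have x1 : 0 < l / v <= 1 by rewrite divr_gt0 //= ler_pdivrMr // mul1r.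
  apply: le_trans (ger_powR x1 Sp) _.
  have xk : l / v <= (k `^ ps)^-1.
    by rewrite ler_pdivrMr // mulrC.
  apply: le_trans (ge0_ler_powR (ltW S0) _ _ xk) _.
  - by rewrite nnegrE divr_ge0 // ltW.
  - by rewrite nnegrE invr_ge0 powR_ge0.
  rewrite powRV ?powR_ge0 // -powRrM psS powRr1 //; exact: ltW.
have hv1 : 0 < v `^ p^-1 by apply: powR_gt0.
have hvQ : 0 < v `^ Q by apply: powR_gt0.
apply: le_trans (_ : v `^ Q / v `^ p^-1 * g * (v `^ p^-1 / k) <= _).
  by rewrite ler_wpM2l // mulr_ge0 // ltW // divr_gt0.
rewrite le_eqVlt; apply/orP; left; apply/eqP.
move: (v `^ Q) (v `^ p^-1) hv1 hvQ => a b a0 b0.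
by field; rewrite !gt_eqF.
Qed.

Local Close Scope ereal_scope.
Local Close Scope classical_set_scope.

Local Open Scope classical_set_scope.

Lemma prod_eps (R : realFieldType) (I : Type) (r : seq I) (a : I -> R) (e : R) :
  (forall i, 0 <= a i) -> 0 <= e <= 1 ->
  \prod_(i <- r) (a i + e) <= \prod_(i <- r) a i + e * \prod_(i <- r) (a i + 2).
Proof.
move=> a0 /andP[e0 e1]; elim: r => [|j r IH]; first by rewrite !big_nil; lra.
rewrite !big_cons.
have P0 : 0 <= \prod_(i <- r) a i by apply: prodr_ge0.
have PE : \prod_(i <- r) a i <= \prod_(i <- r) (a i + 2).
  by apply: ler_prod => i _; rewrite a0 /= lerDl.
have Pe0 : 0 <= \prod_(i <- r) (a i + e) by apply: prodr_ge0 => i _; apply: addr_ge0.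
have aj := a0 j.
move: IH P0 PE Pe0; set P := \prod_(i <- r) a i; set Q := \prod_(i <- r) (a i + e).
set E := \prod_(i <- r) (a i + 2) => IH P0 PE Pe0.
have h : (a j + e) * Q <= (a j + e) * (P + e * E) by apply: ler_wpM2l => //; lra.
have h2 : 0 <= e * (2 * E - P - e * E).
  apply: mulr_ge0 => //; have : 0 <= (1 - e) * E by apply: mulr_ge0; lra.
  lra.
apply: le_trans h _; nra.
Qed.

Local Open Scope ereal_scope.

Lemma wnorm_ge0 (R : realType) (n : nat) (p q : R) (f : 'rV[R]_n -> R) :
  0 <= wMorrey_norm p q f.
Proof.
apply: le_trans (ereal_sup_ubound _) => /=; last first.
  by exists 0%R, 1%R, 1%R; split; [exact: ltr01|split; [exact: ltr01|reflexivity]].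
by apply: mule_ge0; [apply: mule_ge0; [apply: poweR_ge0|rewrite lee_fin]|apply: poweR_ge0].
Qed.

Lemma peri (R : realType) (n : nat) (pp qq : R) (h : 'rV[R]_n -> R) (a : 'rV[R]_n)
  (r v N K s : R) (X : set 'rV[R]_n) :
  (0 < pp)%R -> (0 < r)%R -> leb (eball a r) = v%:E -> (0 < v)%R ->
  wMorrey_norm pp qq h = N%:E -> (N < K)%R -> (0 < s)%R -> (0 <= N)%R ->
  X `<=` eball a r -> X `<=` [set x | s <= `|h x|]%R ->
  leb X <= (v * (K * v `^ (- qq^-1) / s) `^ pp)%:E.
Proof.
move=> pp0 r0 hv v0 hN NK s0 N0 XB Xs.
pose K0 := ((N + K) / 2)%R.
have K0pos : (0 < K0)%R by rewrite /K0; lra.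
have KK0 : (K0 < K)%R by rewrite /K0; lra.
have K0N : (N <= K0)%R by rewrite /K0; lra.
have Kpos : (0 < K)%R by lra.
pose t := (s * K0 / K)%R.
have t0 : (0 < t)%R by rewrite /t; apply: divr_gt0 => //; apply: mulr_gt0.
have ts : (t < s)%R by rewrite /t ltr_pdivrMr //; nra.
pose Y := eball a r `&` [set x | t < `|h x|]%R.
have XY : X `<=` Y by move=> x Xx; split; [exact: XB|apply: lt_le_trans ts (Xs x Xx)].
have YB : leb Y <= v%:E by rewrite -hv; apply: leb_le => x [].
have Y0 := leb_ge0 Y.
have [L LE] : exists L, leb Y = L%:E.
  exists (fine (leb Y)); rewrite fineK // ge0_fin_numE //; apply: le_lt_trans YB _; exact: ltry.
have L0 : (0 <= L)%R by rewrite -lee_fin -LE.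
apply: le_trans (leb_le XY) _; rewrite LE lee_fin.
have hb : ((v `^ (qq^-1 - pp^-1)) * t * L `^ pp^-1 <= N)%R.
  rewrite -lee_fin -hN; apply: ereal_sup_ubound.
  exists a, r, t; split => //; split => //.
  by rewrite hv LE !poweR_EFin !EFinM.
have A0 : (0 < v `^ qq^-1)%R by apply: powR_gt0.
have B0 : (0 < v `^ pp^-1)%R by apply: powR_gt0.
move: hb; rewrite powRB; last by rewrite (gt_eqF v0) implybT.
rewrite powRN.
move=> hb; apply: (@le_trans _ _ ((L `^ pp^-1) `^ pp)%R); first by rewrite powRK.
move: hb.
have Lp0 : (0 <= L `^ pp^-1)%R by apply: powR_ge0.
move: (L `^ pp^-1)%R Lp0 => Lp Lp0 hb.
have hv1 : v = ((v `^ pp^-1) `^ pp)%R by rewrite powRK // ltW.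
rewrite [X in (_ <= X * _)%R]hv1 -powRM; last 2 first.
- exact: ltW.
- by apply: divr_ge0; [apply: mulr_ge0; [lra|rewrite invr_ge0 ltW]|exact: ltW].
apply: ge0_ler_powR; first exact: ltW.
- by rewrite nnegrE.
- rewrite nnegrE; apply: mulr_ge0; [exact: ltW|]; apply: divr_ge0; [apply: divr_ge0|]; apply: ltW => //.
move: (v `^ qq^-1)%R (v `^ pp^-1)%R A0 B0 hb => A B A0 B0 hb.
have : (Lp <= K0 / (A / B * t))%R.
  rewrite ler_pdivlMr; last by apply: mulr_gt0 => //; apply: divr_gt0.
  by apply: le_trans K0N; rewrite mulrC.
move=> h1; apply: le_trans h1 _; rewrite le_eqVlt; apply/orP; left; apply/eqP.
by rewrite /t; field; rewrite !gt_eqF.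
Qed.

Local Close Scope ereal_scope.
Local Close Scope classical_set_scope.

Unset Implicit Arguments. Set Strict Implicit.

Theorem theorem2p2 (R : realType) (n m : nat) (p q : R)
  (p_ q_ : 'I_m -> R) (f : 'I_m -> 'rV[R]_n -> R) :
  (2 <= m)%N ->
  1 <= p -> p <= q ->
  (forall i, 1 <= p_ i /\ p_ i <= q_ i) ->
  let pstar := (\sum_(i < m) (p_ i)^-1)^-1 in
  pstar^-1 <= p^-1 ->
  \sum_(i < m) (q_ i)^-1 = q^-1 ->
  (forall i, in_wMorrey (p_ i) (q_ i) (f i)) ->
  (wMorrey_norm p q (fun x => (\prod_(i < m) f i x)%R)
    <= \prod_(i < m) (((p_ i / pstar) `^ (p_ i)^-1)%R%:E
                      * wMorrey_norm (p_ i) (q_ i) (f i)))%E.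
Proof.
move=> m2 p1 pq hpq ps psp hq hf.
have m0 : (0 < m)%N by apply: leq_trans m2.
have pi0 i : 0 < p_ i by have [h _] := hpq i; apply: lt_le_trans h.
have p0 : 0 < p by apply: lt_le_trans p1.
case: n f hf => [|n] f hf.
  exfalso; have := (hf (Ordinal m0)).2.
  suff -> : wMorrey_norm (p_ (Ordinal m0)) (q_ (Ordinal m0)) (f (Ordinal m0)) = +oo%E.
    by [].
  apply/eqP; rewrite eq_le leey /=; apply: ereal_sup_ubound.
  exists 0, 1, 1; split; first exact: ltr01; split; first exact: ltr01.
  rewrite !leb_dim0 mule1 (poweRyr (r := (p_ (Ordinal m0))^-1)); last first.
    by rewrite invr_neq0 // gt_eqF.
  case: (eqVneq ((q_ (Ordinal m0))^-1 - (p_ (Ordinal m0))^-1) 0) => [->|ne].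
    by rewrite poweRe0 mul1e.
  by rewrite poweRyr // mulyy.
pose N i := fine (wMorrey_norm (p_ i) (q_ i) (f i)).
have normE i : wMorrey_norm (p_ i) (q_ i) (f i) = (N i)%:E.
  by rewrite /N fineK // ge0_fin_numE ?wnorm_ge0 //; case: (hf i).
have N0 i : 0 <= N i by rewrite -lee_fin -normE wnorm_ge0.
rewrite (eq_bigr (fun i => ((p_ i / ps) `^ (p_ i)^-1 * N i)%:E)%E); last first.
  by move=> i _; rewrite normE EFinM.
rewrite prodEFin.
apply: ge_ereal_sup => y [a [r [g [r0 [g0 ->]]]]].
have hV := leb_ball_fin a r (ltn0Sn n).
have [v vE] : exists v, leb (eball a r) = v%:E.
  exists (fine (leb (eball a r))); rewrite fineK // ge0_fin_numE //; exact: leb_ge0.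
have v0 : 0 <= v by rewrite -lee_fin -vE leb_ge0.
set E := (eball a r `&` _)%classic.
have EB : (leb E <= v%:E)%E by rewrite -vE; apply: leb_le; exact: subIsetl.

have [l lE] : exists l, leb E = l%:E.
  exists (fine (leb E)); rewrite fineK // ge0_fin_numE ?leb_ge0 //.
  by apply: le_lt_trans EB _; exact: ltry.
have l0 : 0 <= l by rewrite -lee_fin -lE leb_ge0.
have lv : l <= v by rewrite -lee_fin -lE.
rewrite vE lE !poweR_EFin -!EFinM lee_fin.
have cN0 : 0 <= \prod_(i < m) ((p_ i / ps) `^ (p_ i)^-1 * N i).
  by apply: prodr_ge0 => i _; apply: mulr_ge0; [apply: powR_ge0|apply: N0].
have [v00|vpos] := eqVneq v 0.
  have -> : l = 0 by apply/le_anti; rewrite l0 andbT -v00.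
  by rewrite powR0 ?mulr0 // invr_neq0 // gt_eqF.
have v0' : 0 < v by rewrite lt_neqAle eq_sym vpos.
rewrite -hq.
suff HK : forall K : 'I_m -> R, (forall i, N i < K i) ->
    v `^ (\sum_(i < m) (q_ i)^-1 - p^-1) * g * l `^ p^-1
      <= \prod_(i < m) ((p_ i / ps) `^ (p_ i)^-1 * K i).
  apply/ler_addgt0Pr => d d0.
  set C := \prod_(i < m) (p_ i / ps) `^ (p_ i)^-1.
  set E2 := \prod_(i < m) (N i + 2).
  have C0 : 0 <= C by apply: prodr_ge0 => i _; apply: powR_ge0.
  have E20 : 0 <= E2 by apply: prodr_ge0 => i _; apply: addr_ge0 => //; apply: N0.
  have CE0 : 0 < C * E2 + 1 by have := mulr_ge0 C0 E20; lra.
  pose e := Num.min 1 (d / (C * E2 + 1)).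
  have e0 : 0 < e by rewrite lt_min ltr01 divr_gt0.
  have e1 : e <= 1 by rewrite ge_min lexx.
  have ed : e * (C * E2 + 1) <= d by rewrite -ler_pdivlMr // ge_min lexx orbT.
  apply: le_trans (HK (fun i => N i + e) _) _.
    by move=> i; lra.
  rewrite big_split /= -/C [X in _ <= X + _]big_split /= -/C.
  have := @prod_eps _ _ (index_enum 'I_m) N e N0.
  rewrite (ltW e0) e1 -/E2 => /(_ isT) h.
  apply: le_trans (ler_wpM2l C0 h) _.
  have := mulr_ge0 C0 E20; nra.
move=> K NK.
have K0 i : 0 < K i by apply: le_lt_trans (N0 i) (NK i).
apply: core => //.
move=> s s0 sg.
pose G i := ([set x | - s i < f i x] `&` ~` [set x | s i < f i x])%classic.
have GM i : leb_measurable (G i).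
  by apply: lebmI; [exact: (hf i).1|apply: lebmC; exact: (hf i).1].
have := @leb_split _ _ _ (index_enum 'I_m) G E GM.
have -> : (E `&` [set x | forall i, i \in index_enum 'I_m -> G i x])%classic = set0.
  apply/seteqP; split => x //= [[Bx gx] hG].
  have : `|\prod_(i < m) f i x| <= g.
    rewrite normr_prod -sg; apply: ler_prod => i _.
    have [h1 h2] := hG i (mem_index_enum i).
    rewrite normr_ge0 /= ler_norml (ltW h1) /=.
    by rewrite leNgt; apply/negP.
  by move=> /(lt_le_trans gx); rewrite ltxx.
rewrite leb0 // adde0 => h.
rewrite -lee_fin -lE; apply: le_trans h _; rewrite -sumEFin; apply: lee_sum => i _.
apply: (peri (pi0 i) r0 vE v0' (normE i) (NK i) (s0 i) (N0 i)).
  by move=> x [[]].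
move=> x [_ nG] /=.
case: (ltP (s i) (f i x)) => h.
  exact: le_trans (ltW h) (ler_norm _).
have h' : f i x <= - s i.
  rewrite leNgt; apply/negP => h''; apply: nG; split => //=.
  by apply/negP; rewrite -leNgt.
apply: le_trans (_ : s i <= - f i x) _; first by lra.
by rewrite -normrN ler_norm.
Qed.
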